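(* Let $k$ be an algebraically closed field and $S\subset\mathbb{P}^3$ a smooth cubic surface. Let $\begin{pmatrix} a_1&\cdots&a_6\\ b_1&\cdots&b_6\end{pmatrix}$ be a Schläfli double-six of lines on $S$. For $i\neq j$ let $\pi_{ij}$ be a linear form defining the plane spanned by the intersecting lines $b_i$ and $a_j$, where the forms $\pi_{12},\pi_{23},\pi_{31},\pi_{13},\pi_{21},\pi_{32}$ are scaled so that $\pi_{12}\pi_{23}\pi_{31}+\pi_{13}\pi_{21}\pi_{32}$ is a defining polynomial of $S$ (such a scaling exists), so that $$\Re=\begin{pmatrix}0&\pi_{12}&\pi_{13}\\ \pi_{21}&0&\pi_{23}\\ \pi_{31}&\pi_{32}&0\end{pmatrix}$$ is a determinantal representation of $S$. Then the set of six skew lines corresponding to $\Re$ is $\{a_1,\dots,a_6\}$ and the set of six skew lines corresponding to $\Re^t$ is $\{b_1,\dots,b_6\}$; that is, the two sets together form the double-six $\begin{pmatrix} a_1&\cdots&a_6\\ b_1&\cdots&b_6\end{pmatrix}$.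
   Context: A Schläfli double-six on $S$ is a set of twelve lines $a_1,\dots,a_6,b_1,\dots,b_6$ on $S$ such that the $a_i$ are mutually skew, the $b_j$ are mutually skew, and $a_i$ meets $b_j$ if and only if $i\neq j$. A determinantal representation of $S$ (defined by a cubic form $F$) is a $3\times 3$ matrix of linear forms $M=z_0M_0+\dots+z_3M_3$ with $\det M=cF$, $c\in k\setminus\{0\}$. For a point $P=(\zeta,\eta,\xi)\in\mathbb{P}^2$, the three entries of $M\cdot(\zeta,\eta,\xi)^t$ are linear forms on $\mathbb{P}^3$; there are exactly six points $P$ for which the three planes so defined intersect in a line, and the six resulting lines lie on $S$ and are mutually skew; they are called the six skew lines corresponding to $M$. *)

(* Defs.v *)
From HB Require Import structures.
From mathcomp Require Import all_boot all_order all_algebra.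
From mathcomp Require Import mpoly.
Set Implicit Arguments. Unset Strict Implicit. Unset Printing Implicit Defensive.
Import GRing.Theory.
Local Open Scope ring_scope.

Section CubicSurfaces.
Variable k : fieldType.

(* Points of P^3 are nonzero row vectors of k^4 (up to scaling);
   coordinates z_0..z_3. Evaluation of a form at such a vector: *)
Definition pt_eval (F : {mpoly k[4]}) (x : 'rV[k]_4) : k := F.@[fun i => x 0 i].

Definition smooth_cubic_form (F : {mpoly k[4]}) : Prop :=
  F \is 3.-homog /\
  forall x : 'rV[k]_4, x != 0 -> pt_eval F x = 0 ->
    exists i : 'I_4, pt_eval (mderiv i F) x != 0.

(* A line of P^3 is a 2-dimensional subspace of k^4, given as the row space
   of a rank-2 2x4 matrix.  Two such matrices give the same line iff they
   have the same row space, (L1 == L2)%MS. *)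
Definition is_line (L : 'M[k]_(2,4)) : Prop := \rank L = 2%N.

Definition line_on (F : {mpoly k[4]}) (L : 'M[k]_(2,4)) : Prop :=
  forall x : 'rV[k]_4, (x <= L)%MS -> pt_eval F x = 0.

Definition lines_meet (L1 L2 : 'M[k]_(2,4)) : bool := (L1 :&: L2)%MS != 0.

Definition double_six (F : {mpoly k[4]}) (a b : 'I_6 -> 'M[k]_(2,4)) : Prop :=
  (forall i, is_line (a i) /\ is_line (b i) /\ line_on F (a i) /\ line_on F (b i)) /\
  (forall i j, i != j -> ~~ lines_meet (a i) (a j)) /\
  (forall i j, i != j -> ~~ lines_meet (b i) (b j)) /\
  (forall i j, lines_meet (a i) (b j) = (i != j)).

Definition lin_eval (l : 'rV[k]_4) (x : 'rV[k]_4) : k := \sum_(i < 4) l 0 i * x 0 i.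
Definition lin_poly (l : 'rV[k]_4) : {mpoly k[4]} := \sum_(i < 4) l 0 i *: 'X_i.

Definition form_vanishes_on (l : 'rV[k]_4) (L : 'M[k]_(2,4)) : Prop :=
  forall x : 'rV[k]_4, (x <= L)%MS -> lin_eval l x = 0.

(* A 3x3 matrix of linear forms M = z_0 M_0 + ... + z_3 M_3 is stored entrywise
   by the coefficient vectors of its entries: M : 'M['rV[k]_4]_3. *)

(* For P = (zeta,eta,xi), the coefficient matrix (3x4) of the three linear forms
   given by the entries of M . P^t. *)
Definition forms_at (M : 'M['rV[k]_4]_3) (P : 'rV[k]_3) : 'M[k]_(3,4) :=
  \matrix_(r < 3, j < 4) \sum_(c < 3) P 0 c * M r c 0 j.

(* L is one of the six skew lines corresponding to M: for some point P of P^2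
   the three planes defined by M . P^t meet in a line, and that line is L. *)
Definition corr_line (M : 'M['rV[k]_4]_3) (L : 'M[k]_(2,4)) : Prop :=
  exists P : 'rV[k]_3, P != 0 /\ \rank (forms_at M P) = 2%N /\
    (L == kermx (forms_at M P)^T)%MS.

End CubicSurfaces.

(* indices 1,2,3 of the paper are the ordinals 0,1,2 of 'I_6 *)
Definition i36 (i : 'I_3) : 'I_6 := widen_ord (isT : (3 <= 6)%N) i.

Definition Rmat (k : fieldType) (pi : 'I_6 -> 'I_6 -> 'rV[k]_4) : 'M['rV[k]_4]_3 :=
  \matrix_(i < 3, j < 3) (if i == j then 0 else pi (i36 i) (i36 j)).

(* Main.v *)
Require Import Defs.
From HB Require Import structures.
From mathcomp Require Import all_boot all_order all_algebra.
From mathcomp Require Import mpoly.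
From mathcomp Require Import ring zify.
Set Implicit Arguments. Unset Strict Implicit. Unset Printing Implicit Defensive.
Import GRing.Theory.
Local Open Scope ring_scope.

Lemma det3E (R : fieldType) (A : 'M[R]_3) : \det A =
  A 0 0 * (A 1 1 * A 2 2 - A 1 2 * A 2 1) - A 0 1 * (A 1 0 * A 2 2 - A 1 2 * A 2 0)
  + A 0 2 * (A 1 0 * A 2 1 - A 1 1 * A 2 0).
Proof.
pose g (i j : nat) := A (inord i) (inord j).
have eA : A = \matrix_(i, j) g i j by apply/matrixP=> i j; rewrite mxE /g !inord_val.
rewrite [in LHS]eA.
rewrite (expand_det_row _ 0) !big_ord_recr big_ord0 /= add0r.
rewrite /cofactor !(expand_det_row _ 0) !big_ord_recr !big_ord0 /= !add0r.
rewrite /cofactor !det_mx11 !mxE /= /g.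
rewrite /bump /=.
have -> : (inord 0 : 'I_3) = 0 by apply/val_inj; rewrite /= inordK.
have -> : (inord 1 : 'I_3) = 1 by apply/val_inj; rewrite /= inordK.
have -> : (inord 2 : 'I_3) = 2 by apply/val_inj; rewrite /= inordK.
rewrite !expr1 expr2; ring.
Qed.

Definition z0 : 'I_3 := @Ordinal 3 0 isT.
Definition z1 : 'I_3 := @Ordinal 3 1 isT.
Definition z2 : 'I_3 := @Ordinal 3 2 isT.
Definition q0 : 'I_6 := @Ordinal 6 0 isT.
Definition q1 : 'I_6 := @Ordinal 6 1 isT.
Definition q2 : 'I_6 := @Ordinal 6 2 isT.
Definition q3 : 'I_6 := @Ordinal 6 3 isT.
Definition q4 : 'I_6 := @Ordinal 6 4 isT.
Definition q5 : 'I_6 := @Ordinal 6 5 isT.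

Lemma sum3 (V : nmodType) (F : 'I_3 -> V) : \sum_(i < 3) F i = F z0 + F z1 + F z2.
Proof. by rewrite !big_ord_recr big_ord0 /= add0r; congr (F _ + F _ + F _); apply/val_inj. Qed.

Lemma sum4 (V : nmodType) (F : 'I_4 -> V) : \sum_(i < 4) F i =
  F (@Ordinal 4 0 isT) + F (@Ordinal 4 1 isT) + F (@Ordinal 4 2 isT) + F (@Ordinal 4 3 isT).
Proof. by rewrite !big_ord_recr big_ord0 /= add0r; congr (F _ + F _ + F _ + F _); apply/val_inj. Qed.

Lemma sum6 (V : nmodType) (F : 'I_6 -> V) : \sum_(i < 6) F i =
  F q0 + F q1 + F q2 + F q3 + F q4 + F q5.
Proof.
by rewrite !big_ord_recr big_ord0 /= add0r; congr (F _ + F _ + F _ + F _ + F _ + F _); apply/val_inj.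
Qed.

Section Lin.
Variable k : fieldType.

Notation van Y l := (Y <= kermx (trmx l))%MS.

Lemma vanE m (Y : 'M[k]_(m,4)) (l : 'rV_4) : van Y l = (Y *m l^T == 0).
Proof. exact: sub_kermx. Qed.

Lemma van_lin m (Y : 'M[k]_(m,4)) (a b : k) (l1 l2 : 'rV[k]_4) :
  van Y l1 -> van Y l2 -> van Y (a *: l1 + b *: l2).
Proof.
rewrite !vanE => /eqP h1 /eqP h2.
by rewrite linearD !linearZ /= mulmxDr -!scalemxAr h1 h2 !scaler0 addr0.
Qed.

Lemma vanZr m (Y : 'M[k]_(m,4)) (a : k) (l : 'rV[k]_4) : van Y l -> van Y (a *: l).
Proof. by move=> h; have := van_lin a 0 h h; rewrite scale0r addr0. Qed.

Lemma vanZ m (Y : 'M[k]_(m,4)) (a : k) (l : 'rV[k]_4) : a != 0 -> van Y (a *: l) -> van Y l.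
Proof.
by move=> na; rewrite !vanE linearZ /= -scalemxAr scaler_eq0 (negPf na).
Qed.

Lemma van0 m (Y : 'M[k]_(m,4)) : van Y (0 : 'rV[k]_4).
Proof. by rewrite vanE trmx0 mulmx0. Qed.

Lemma vanAdd m1 m2 (Y : 'M[k]_(m1,4)) (Z : 'M[k]_(m2,4)) (l : 'rV[k]_4) :
  van Y l -> van Z l -> van (Y + Z)%MS l.
Proof. by move=> h1 h2; rewrite addsmx_sub h1. Qed.

Lemma rank_ker1 (l : 'rV[k]_4) : l != 0 -> \rank (kermx l^T) = 3%N.
Proof. by move=> nz; rewrite mxrank_ker mxrank_tr rank_rV nz. Qed.

Lemma V3 m1 m2 (U : 'M[k]_(m1,4)) (V : 'M[k]_(m2,4)) (l : 'rV[k]_4) :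
  \rank (U + V)%MS = 4%N -> van U l -> van V l -> l = 0.
Proof.
move=> hr hU hV; apply/eqP; apply: contraT => nz.
by have := mxrankS (vanAdd hU hV); rewrite hr rank_ker1.
Qed.

Lemma V4 m1 m2 (U : 'M[k]_(m1,4)) (V : 'M[k]_(m2,4)) (x y : 'rV[k]_4) :
  \rank (U + V)%MS = 4%N -> van U x -> van V y -> x + y = 0 -> x = 0.
Proof.
move=> hr hU hV e.
have hx : x = (-1) *: y + 0 *: y.
  by rewrite scaleN1r scale0r addr0; apply/eqP; rewrite -addr_eq0 e.
have hVx : van V x by rewrite hx van_lin.
exact: V3 hr hU hVx.
Qed.

Lemma comb_nz m1 m2 (U : 'M[k]_(m1,4)) (V : 'M[k]_(m2,4)) (l1 l2 : 'rV[k]_4) (a b : k) :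
  \rank (U + V)%MS = 4%N -> van U l1 -> van V l2 -> l1 != 0 -> l2 != 0 ->
  a *: l1 + b *: l2 = 0 -> a = 0 /\ b = 0.
Proof.
move=> hr h1 h2 n1 n2 e.
have e1 := V4 hr (vanZr a h1) (vanZr b h2) e.
move: e; rewrite e1 add0r => /eqP; rewrite scaler_eq0 (negPf n2) orbF => /eqP ->.
by move/eqP: e1; rewrite scaler_eq0 (negPf n1) orbF => /eqP ->.
Qed.

Lemma V5 m1 m2 m (U : 'M[k]_(m1,4)) (V : 'M[k]_(m2,4)) (Y : 'M[k]_(m,4)) (u v : 'rV[k]_4) :
  \rank (U + V)%MS = 4%N -> van U u -> van V v -> u != 0 -> v != 0 ->
  van Y u -> van Y v -> (\rank Y <= 2)%N.
Proof.
move=> hr hUu hVv nu nv hYu hYv; rewrite leqNgt; apply/negP => h3.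
have hK : (kermx u^T <= Y)%MS.
  by rewrite -(geq_leqif (mxrank_leqif_sup hYu)) rank_ker1.
have hUv : van U v by apply: submx_trans hUu (submx_trans hK hYv).
by move/eqP: nv; apply; apply: V3 hr hUv hVv.
Qed.

Lemma V6 m1 m2 m m3 (U : 'M[k]_(m1,4)) (V : 'M[k]_(m2,4)) (Y : 'M[k]_(m,4))
   (W : 'M[k]_(m3,4)) (u v : 'rV[k]_4) :
  \rank (U + V)%MS = 4%N -> van U u -> van V v -> u != 0 -> v != 0 ->
  \rank W = 2%N -> van W u -> van W v ->
  van Y u -> van Y v -> (Y <= W)%MS.
Proof.
move=> hr hUu hVv nu nv hW hWu hWv hYu hYv.
have h := V5 hr hUu hVv nu nv (vanAdd hYu hWu) (vanAdd hYv hWv).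
have : (Y + W <= W)%MS.
  by rewrite -(geq_leqif (mxrank_leqif_sup (addsmxSr Y W))) hW.
exact: submx_trans (addsmxSl Y W).
Qed.

Lemma cap0 (U V : 'M[k]_(2,4)) : \rank (U + V)%MS = 4%N -> (U :&: V)%MS = 0.
Proof.
move=> h; apply/eqP; rewrite -mxrank_eq0.
have := mxrank_sum_cap U V; rewrite h.
have := rank_leq_row U; have := rank_leq_row V.
move: (\rank U) (\rank V) (\rank (U :&: V)%MS) => n1 n2 n3.
clear; move=> h1 h2 h3; apply/eqP; lia.
Qed.

Lemma sub_cap0 m (X : 'M[k]_(m,4)) (U V : 'M[k]_(2,4)) :
  \rank (U + V)%MS = 4%N -> (X <= U)%MS -> (X <= V)%MS -> X = 0.
Proof.
move=> h hU hV; apply/eqP; rewrite -submx0 -(cap0 h) sub_capmx hU.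
exact: hV.
Qed.

Definition ev (l x : 'rV[k]_4) : k := (x *m l^T) 0 0.

Lemma van_ev (x l : 'rV[k]_4) : van x l = (ev l x == 0).
Proof.
rewrite vanE; apply/idP/idP => /eqP h; apply/eqP; first by rewrite /ev h mxE.
by apply/matrixP => i j; rewrite !ord1 [RHS]mxE.
Qed.

Lemma ev_vanish m (U : 'M[k]_(m,4)) (x l : 'rV[k]_4) :
  van U l -> (x <= U)%MS -> ev l x = 0.
Proof. by move=> h hx; apply/eqP; rewrite -van_ev (submx_trans hx h). Qed.

Lemma evD (l x y : 'rV[k]_4) (t : k) : ev l (x + t *: y) = ev l x + t * ev l y.
Proof. by rewrite /ev mulmxDl -scalemxAl !mxE. Qed.

Lemma evL (l1 l2 x : 'rV[k]_4) (a b : k) :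
  ev (a *: l1 + b *: l2) x = a * ev l1 x + b * ev l2 x.
Proof. by rewrite /ev linearD !linearZ /= mulmxDr -!scalemxAr !mxE. Qed.

Lemma evL2 (l x y : 'rV[k]_4) (a b : k) :
  ev l (a *: x + b *: y) = a * ev l x + b * ev l y.
Proof. by rewrite /ev mulmxDl -!scalemxAl !mxE. Qed.


Lemma two_zero_gen m (Y : 'M[k]_(m,4)) (W Bj Bk : 'M[k]_(2,4)) (u v : 'rV[k]_4) (c : k) :
  c != 0 -> \rank W = 2%N -> \rank (Bj + Bk)%MS = 4%N -> van Bj u -> van Bk v ->
  van W u -> van W v -> u != 0 -> v != 0 -> van Y (c *: u) -> van Y (c *: v) ->
  (Y <= W)%MS.
Proof.
move=> nc hW hr hBu hBv hWu hWv nu nv hYu hYv.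
exact: V6 hr hBu hBv nu nv hW hWu hWv (vanZ nc hYu) (vanZ nc hYv).
Qed.

Lemma one_zero_gen m (Y : 'M[k]_(m,4)) (Aj Ak Bi Bk : 'M[k]_(2,4))
   (ujk uij uik ukj : 'rV[k]_4) (c1 c2 c3 c4 : k) :
  (2 <= \rank Y)%N -> c1 != 0 -> c2 != 0 -> c4 != 0 ->
  ujk != 0 -> uij != 0 -> ukj != 0 ->
  \rank Aj = 2%N -> \rank Ak = 2%N -> \rank (Bi + Bk)%MS = 4%N ->
  \rank (Aj + Ak)%MS = 4%N ->
  van Y (c1 *: ujk) -> van Ak ujk -> van Y (c2 *: uij + c3 *: uik) -> van Ak uik ->
  van Bi uij -> van Aj uij -> van Bk ukj -> van Aj ukj -> van Y (c4 *: ukj) -> False.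
Proof.
move=> hY n1 n2 n4 njk nij nkj rAj rAk rB rA hY1 hAk1 hYf hAk2 hBi hAj1 hBk hAj2 hY4.
have hYjk := vanZ n1 hY1.
have hsum : (\rank (Y + Ak)%MS <= 3)%N.
  by have := mxrankS (vanAdd hYjk hAk1); rewrite rank_ker1.
have hcap := mxrank_sum_cap Y Ak.
have hZ1 : (1 <= \rank (Y :&: Ak)%MS)%N.
  move: hY hsum hcap; rewrite rAk.
  move: (\rank Y) (\rank (Y + Ak)%MS) (\rank (Y :&: Ak)%MS) => n1' n2' n3'.
  clear; lia.
have ZY := capmxSl Y Ak; have ZA := capmxSr Y Ak.
have Zik : van (Y :&: Ak)%MS uik := submx_trans ZA hAk2.
have Zf := submx_trans ZY hYf.
have Zij : van (Y :&: Ak)%MS uij.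
  apply: (vanZ n2).
  have := van_lin 1 (- c3) Zf Zik.
  by rewrite scale1r scaleNr addrK.
have Zkj : van (Y :&: Ak)%MS ukj := submx_trans ZY (vanZ n4 hY4).
have hZ := V6 rB hBi hBk nij nkj rAj hAj1 hAj2 Zij Zkj.
have := sub_cap0 rA hZ ZA.
move=> e; move: hZ1; rewrite e mxrank0 //.
Qed.

Definition gg (c : 'rV[k]_6) := c 0 q0 * c 0 q3 * c 0 q4 - c 0 q1 * c 0 q2 * c 0 q5.
Definition gA (a b : 'rV[k]_6) :=
  a 0 q0 * a 0 q3 * b 0 q4 + a 0 q0 * b 0 q3 * a 0 q4 + b 0 q0 * a 0 q3 * a 0 q4
  - (a 0 q1 * a 0 q2 * b 0 q5 + a 0 q1 * b 0 q2 * a 0 q5 + b 0 q1 * a 0 q2 * a 0 q5).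
Definition gB (a b : 'rV[k]_6) :=
  a 0 q0 * b 0 q3 * b 0 q4 + b 0 q0 * a 0 q3 * b 0 q4 + b 0 q0 * b 0 q3 * a 0 q4
  - (a 0 q1 * b 0 q2 * b 0 q5 + b 0 q1 * a 0 q2 * b 0 q5 + b 0 q1 * b 0 q2 * a 0 q5).

Lemma ggE (a b : 'rV[k]_6) (l m : k) : gg (l *: a + m *: b) =
  l ^+ 3 * gg a + l ^+ 2 * m * gA a b + l * m ^+ 2 * gB a b + m ^+ 3 * gg b.
Proof. rewrite /gg /gA /gB !mxE; ring. Qed.

Lemma dec2 n (x u v : 'rV[k]_n) : (x <= u + v)%MS -> exists l m, x = l *: u + m *: v.
Proof.
case/sub_addsmxP => [[u1 u2] /= ->]; exists (u1 0 0), (u2 0 0).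
by rewrite {1}(mx11_scalar u1) {1}(mx11_scalar u2) !mul_scalar_mx.
Qed.

Lemma four_root m (V : 'M[k]_(m,6)) (c3 c4 c5 c : 'rV[k]_6) :
  (\rank V <= 2)%N -> (c3 <= V)%MS -> (c4 <= V)%MS -> (c5 <= V)%MS -> (c <= V)%MS ->
  gg c3 = 0 -> gg c4 = 0 -> gg c5 = 0 -> gg c = 0 ->
  c3 0 q0 != 0 ->
  ~~ (c4 <= c3)%MS -> ~~ (c5 <= c3)%MS -> ~~ (c5 <= c4)%MS ->
  ~~ (c <= c3)%MS -> ~~ (c <= c4)%MS -> ~~ (c <= c5)%MS ->
  (forall r : 'rV[k]_6, (r <= V)%MS -> r 0 q0 = 0 -> r != 0 -> gg r != 0) -> False.
Proof.
move=> hV h3 h4 h5 h g3 g4 g5 g n30 n43 n53 n54 n3 n4 n5 hNZ.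
have nz3 : c3 != 0 by apply: contra n30 => /eqP ->; rewrite mxE.
have hlt : (c3 < c3 + c4)%MS by rewrite ltmxE addsmxSl /= addsmx_sub submx_refl.
have hr2 := rank_ltmx hlt.
move: hr2; rewrite rank_rV nz3 => hr2.
have h34V : (c3 + c4 <= V)%MS by rewrite addsmx_sub h3.
have hV34 : (V <= c3 + c4)%MS.
  by rewrite -(geq_leqif (mxrank_leqif_sup h34V)); apply: leq_trans hV hr2.
have [x [y e5]] := dec2 (submx_trans h5 hV34).
have [u [v e]] := dec2 (submx_trans h hV34).
have sc : forall (l : k) (z : 'rV[k]_6), (l *: z <= z)%MS.
  by move=> l z; apply: scalemx_sub; apply: submx_refl.
have ny : y != 0.
  by apply: contra n53 => /eqP y0; rewrite e5 y0 scale0r addr0 sc.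
have nx : x != 0.
  by apply: contra n54 => /eqP x0; rewrite e5 x0 scale0r add0r sc.
have nv : v != 0.
  by apply: contra n3 => /eqP y0; rewrite e y0 scale0r addr0 sc.
have nu : u != 0.
  by apply: contra n4 => /eqP x0; rewrite e x0 scale0r add0r sc.
have ndet : x * v - y * u != 0.
  apply: contra n5 => /eqP hd.
  have hv : v = u / x * y.
    have hxv : x * v = y * u by apply/eqP; rewrite -subr_eq0 hd.
    by apply: (mulfI nx); rewrite hxv; field.
  have -> : c = (u / x) *: c5.
    by rewrite e e5 scalerDr !scalerA -hv; congr (_ *: _ + _); field.
  exact: sc.
have hx : gA c3 c4 * x + gB c3 c4 * y = 0.
  have := ggE c3 c4 x y; rewrite -e5 g5 g3 g4 !mulr0 addr0 => /esym.
  rewrite (_ : _ + _ + _ = x * y * (gA c3 c4 * x + gB c3 c4 * y)); last by ring.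
  by move/eqP; rewrite !mulf_eq0 (negPf nx) (negPf ny) /= => /eqP.
have hu : gA c3 c4 * u + gB c3 c4 * v = 0.
  have := ggE c3 c4 u v; rewrite -e g g3 g4 !mulr0 addr0 => /esym.
  rewrite (_ : _ + _ + _ = u * v * (gA c3 c4 * u + gB c3 c4 * v)); last by ring.
  by move/eqP; rewrite !mulf_eq0 (negPf nu) (negPf nv) /= => /eqP.
have hA : gA c3 c4 = 0.
  have : gA c3 c4 * (x * v - y * u) = 0.
    rewrite (_ : _ * _ = v * (gA c3 c4 * x + gB c3 c4 * y) - y * (gA c3 c4 * u + gB c3 c4 * v)); last by ring.
    by rewrite hx hu !mulr0 subr0.
  by move/eqP; rewrite mulf_eq0 (negPf ndet) orbF => /eqP.
have hB : gB c3 c4 = 0.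
  have : gB c3 c4 * (x * v - y * u) = 0.
    rewrite (_ : _ * _ = x * (gA c3 c4 * u + gB c3 c4 * v) - u * (gA c3 c4 * x + gB c3 c4 * y)); last by ring.
    by rewrite hx hu !mulr0 subr0.
  by move/eqP; rewrite mulf_eq0 (negPf ndet) orbF => /eqP.
set r := c4 0 q0 *: c3 + (- c3 0 q0) *: c4.
have hrV : (r <= V)%MS by rewrite addmx_sub // scalemx_sub.
have hr0 : r 0 q0 = 0 by rewrite !mxE; ring.
have nr : r != 0.
  apply: contra n43 => /eqP r0.
  have -> : c4 = (c4 0 q0 / c3 0 q0) *: c3.
    apply: (@scalerI _ _ (c3 0 q0)) => //.
    rewrite scalerA mulrC divfK //.
    by move: r0; rewrite /r scaleNr => /eqP; rewrite subr_eq0 => /eqP ->.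
  exact: sc.
have := hNZ r hrV hr0 nr.
by rewrite /r ggE g3 g4 hA hB !mulr0 !addr0 eqxx.
Qed.


Lemma det3E' (A : 'M[k]_3) : \det A =
  A z0 z0 * (A z1 z1 * A z2 z2 - A z1 z2 * A z2 z1)
  - A z0 z1 * (A z1 z0 * A z2 z2 - A z1 z2 * A z2 z0)
  + A z0 z2 * (A z1 z0 * A z2 z1 - A z1 z1 * A z2 z0).
Proof.
have e0 : (0 : 'I_3) = z0 by apply/val_inj.
have e1 : (1 : 'I_3) = z1 by apply/val_inj.
have e2 : (2 : 'I_3) = z2 by apply/val_inj.
by rewrite det3E e2 e1 e0.
Qed.

Lemma scalar_key (t al be E12 E13 E21 E23 E31 E32 F31 F32 : k) :
  t != 0 -> be - t * al != 0 -> al * E31 + be * F31 = 0 -> al * E32 + be * F32 = 0 ->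
  (0 + t * E12) * (E23 + t * 0) * (E31 + t * F31) +
  (0 + t * E13) * (E21 + t * 0) * (E32 + t * F32) = 0 ->
  E12 * E23 * E31 + E13 * E21 * E32 = 0.
Proof.
move=> nt nb h1 h2 h3.
have : t * (be - t * al) * (E12 * E23 * E31 + E13 * E21 * E32) = 0.
  rewrite (_ : _ * _ = be * ((0 + t * E12) * (E23 + t * 0) * (E31 + t * F31) +
    (0 + t * E13) * (E21 + t * 0) * (E32 + t * F32)) - t ^+ 2 * (E12 * E23 * (al * E31 + be * F31)
    + E13 * E21 * (al * E32 + be * F32))); last by ring.
  by rewrite h1 h2 h3; ring.
by move/eqP; rewrite !mulf_eq0 (negPf nt) (negPf nb) /= => /eqP.
Qed.

Lemma scal2 (al be E31 E32 F31 F32 P0 P1 : k) : be != 0 ->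
  al * E31 + be * F31 = 0 -> al * E32 + be * F32 = 0 -> P0 * E31 + P1 * E32 = 0 ->
  P0 * F31 + P1 * F32 = 0.
Proof.
move=> nb h1 h2 h3; apply: (mulfI nb); rewrite mulr0.
have e : be * (P0 * F31 + P1 * F32) = P0 * (al * E31 + be * F31) + P1 * (al * E32 + be * F32)
   - al * (P0 * E31 + P1 * E32) by ring.
by rewrite e h1 h2 h3 !mulr0 subr0 addr0.
Qed.

Definition Nm (E12 E13 E21 E23 E31 E32 : k) : 'M[k]_3 :=
  \matrix_(r < 3, c < 3)
   match nat_of_ord r, nat_of_ord c with
   | 0, 1 => E12 | 0, 2 => E13 | 1, 0 => E21 | 1, 2 => E23
   | 2, 0 => E31 | 2, 1 => E32 | _, _ => 0 end.

Lemma key_sol (E12 E13 E21 E23 E31 E32 : k) :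
  E12 * E23 * E31 + E13 * E21 * E32 = 0 ->
  exists2 P : 'rV[k]_3, P != 0 &
   [/\ P 0 z1 * E12 + P 0 z2 * E13 = 0, P 0 z0 * E21 + P 0 z2 * E23 = 0
     & P 0 z0 * E31 + P 0 z1 * E32 = 0].
Proof.
move=> hD.
have : \det (Nm E12 E13 E21 E23 E31 E32)^T == 0.
  have -> : \det (Nm E12 E13 E21 E23 E31 E32)^T = E12 * E23 * E31 + E13 * E21 * E32.
    by rewrite det3E' !mxE /=; ring.
  by rewrite hD.
case/det0P => P nP eP; exists P => //.
have E := fun r => congr1 (fun M : 'rV_3 => M 0 r) eP.
have E0 := E z0; have E1 := E z1; have E2 := E z2.
rewrite !mxE !sum3 !mxE /= in E0 E1 E2.
split.
- by rewrite -E0 mulr0 add0r.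
- by rewrite -E1 mulr0 addr0.
- by rewrite -E2 mulr0 addr0.
Qed.

End Lin.

Notation van Y l := (Y <= kermx (trmx l))%MS.

Section Core.
Variable k : fieldType.
Variables (a b : 'I_6 -> 'M[k]_(2,4)) (pi : 'I_6 -> 'I_6 -> 'rV[k]_4).

Local Notation p12 := (pi q0 q1).
Local Notation p13 := (pi q0 q2).
Local Notation p21 := (pi q1 q0).
Local Notation p23 := (pi q1 q2).
Local Notation p31 := (pi q2 q0).
Local Notation p32 := (pi q2 q1).
Local Notation a1 := (a q0).
Local Notation a2 := (a q1).
Local Notation a3 := (a q2).
Local Notation b1 := (b q0).
Local Notation b2 := (b q1).
Local Notation b3 := (b q2).

Definition fr (P : 'rV[k]_3) (r : nat) : 'rV[k]_4 :=
  match r with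
  | 0 => P 0 z1 *: p12 + P 0 z2 *: p13
  | 1 => P 0 z0 *: p21 + P 0 z2 *: p23
  | _ => P 0 z0 *: p31 + P 0 z1 *: p32
  end.
Definition AP (P : 'rV[k]_3) : 'M[k]_(3,4) := \matrix_(r < 3, j < 4) fr P r 0 j.
Definition KerP (P : 'rV[k]_3) := kermx (AP P)^T.

Lemma AP_ker m (Y : 'M[k]_(m,4)) (P : 'rV[k]_3) i (r : 'I_3) :
  (Y *m (AP P)^T) i r = (Y *m (fr P r)^T) i 0.
Proof. by rewrite !mxE; apply: eq_bigr => j _; rewrite !mxE. Qed.

Lemma KerP_sub m (Y : 'M[k]_(m,4)) (P : 'rV[k]_3) :
  (Y <= KerP P)%MS = [&& van Y (fr P 0), van Y (fr P 1) & van Y (fr P 2)].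
Proof.
rewrite /KerP sub_kermx !vanE; apply/idP/and3P.
  move/eqP => h.
  have hr : forall r : 'I_3, Y *m (fr P r)^T = 0.
    by move=> r; apply/matrixP => i j; rewrite ord1 -AP_ker h !mxE.
  by split; apply/eqP; [exact: (hr z0) | exact: (hr z1) | exact: (hr z2)].
case=> /eqP h0 /eqP h1 /eqP h2; apply/eqP/matrixP => i r; rewrite AP_ker.
by case: r => [[|[|[|//]]] hr] /=; rewrite ?h0 ?h1 ?h2 !mxE.
Qed.

Lemma rank_KerP (P : 'rV[k]_3) : \rank (KerP P) = (4 - \rank (AP P))%N.
Proof. by rewrite mxrank_ker mxrank_tr. Qed.

Lemma rowAP (P : 'rV[k]_3) (r : 'I_3) : row r (AP P) = fr P r.
Proof. by apply/rowP => j; rewrite !mxE. Qed.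

Lemma wAP (w P : 'rV[k]_3) :
  w *m AP P = w 0 z0 *: fr P 0 + w 0 z1 *: fr P 1 + w 0 z2 *: fr P 2.
Proof. by rewrite mulmx_sum_row sum3 !rowAP. Qed.

Lemma rv3_eq0 (P : 'rV[k]_3) : P 0 z0 = 0 -> P 0 z1 = 0 -> P 0 z2 = 0 -> P = 0.
Proof.
move=> h0 h1 h2; apply/rowP => l; rewrite mxE.
case: l => [[|[|[|//]]] hl].
- by rewrite (_ : Ordinal hl = z0) //; apply/val_inj.
- by rewrite (_ : Ordinal hl = z1) //; apply/val_inj.
- by rewrite (_ : Ordinal hl = z2) //; apply/val_inj.
Qed.

Lemma rv6_eq0 (r : 'rV[k]_6) : r 0 q0 = 0 -> r 0 q1 = 0 -> r 0 q2 = 0 ->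
  r 0 q3 = 0 -> r 0 q4 = 0 -> r 0 q5 = 0 -> r = 0.
Proof.
move=> h0 h1 h2 h3 h4 h5; apply/rowP => l; rewrite mxE.
case: l => [[|[|[|[|[|[|//]]]]]] hl].
- by rewrite (_ : Ordinal hl = q0) //; apply/val_inj.
- by rewrite (_ : Ordinal hl = q1) //; apply/val_inj.
- by rewrite (_ : Ordinal hl = q2) //; apply/val_inj.
- by rewrite (_ : Ordinal hl = q3) //; apply/val_inj.
- by rewrite (_ : Ordinal hl = q4) //; apply/val_inj.
- by rewrite (_ : Ordinal hl = q5) //; apply/val_inj.
Qed.

Lemma eqmx_tr m1 m2 m3 (A : 'M[k]_(m1,4)) (B : 'M[k]_(m2,4)) (C : 'M[k]_(m3,4)) :
  (A == B)%MS -> (B == C)%MS -> (A == C)%MS.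
Proof.
move=> /andP[h1 h2] /andP[h3 h4]; apply/andP; split; [exact: submx_trans h1 h3 | exact: submx_trans h4 h2].
Qed.

Hypothesis Hra : forall i, \rank (a i) = 2%N.
Hypothesis Hrb : forall i, \rank (b i) = 2%N.
Hypothesis Hsa : forall i j, i != j -> \rank (a i + a j)%MS = 4%N.
Hypothesis Hsb : forall i j, i != j -> \rank (b i + b j)%MS = 4%N.
Hypothesis Hsab : forall i, \rank (a i + b i)%MS = 4%N.
Hypothesis Hmeet : forall i j, i != j -> (a i :&: b j)%MS != 0.
Hypothesis Hpi : forall i j, i != j ->
  [/\ pi i j != 0, van (b i) (pi i j) & van (a j) (pi i j)].

Definition det3 (x : 'rV[k]_4) :=
  ev p12 x * ev p23 x * ev p31 x + ev p13 x * ev p21 x * ev p32 x.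

Hypothesis Hdet : forall j : 'I_6, (3 <= j)%N ->
  forall x : 'rV[k]_4, (x <= a j)%MS -> det3 x = 0.
Hypothesis Hinf : forall u : k, exists t, t != 0 /\ t != u.

Let n12 : p12 != 0. Proof. by case: (Hpi (isT : q0 != q1)). Qed.
Let n13 : p13 != 0. Proof. by case: (Hpi (isT : q0 != q2)). Qed.
Let n21 : p21 != 0. Proof. by case: (Hpi (isT : q1 != q0)). Qed.
Let n23 : p23 != 0. Proof. by case: (Hpi (isT : q1 != q2)). Qed.
Let n31 : p31 != 0. Proof. by case: (Hpi (isT : q2 != q0)). Qed.
Let n32 : p32 != 0. Proof. by case: (Hpi (isT : q2 != q1)). Qed.
Let b12 : van b1 p12. Proof. by case: (Hpi (isT : q0 != q1)). Qed.
Let b13 : van b1 p13. Proof. by case: (Hpi (isT : q0 != q2)). Qed.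
Let b21 : van b2 p21. Proof. by case: (Hpi (isT : q1 != q0)). Qed.
Let b23 : van b2 p23. Proof. by case: (Hpi (isT : q1 != q2)). Qed.
Let b31 : van b3 p31. Proof. by case: (Hpi (isT : q2 != q0)). Qed.
Let b32 : van b3 p32. Proof. by case: (Hpi (isT : q2 != q1)). Qed.
Let a12 : van a2 p12. Proof. by case: (Hpi (isT : q0 != q1)). Qed.
Let a13 : van a3 p13. Proof. by case: (Hpi (isT : q0 != q2)). Qed.
Let a21 : van a1 p21. Proof. by case: (Hpi (isT : q1 != q0)). Qed.
Let a23 : van a3 p23. Proof. by case: (Hpi (isT : q1 != q2)). Qed.
Let a31 : van a1 p31. Proof. by case: (Hpi (isT : q2 != q0)). Qed.
Let a32 : van a2 p32. Proof. by case: (Hpi (isT : q2 != q1)). Qed.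
Let sa12 : \rank (a1 + a2)%MS = 4%N. Proof. exact: Hsa. Qed.
Let sa13 : \rank (a1 + a3)%MS = 4%N. Proof. exact: Hsa. Qed.
Let sa23 : \rank (a2 + a3)%MS = 4%N. Proof. exact: Hsa. Qed.
Let sa21 : \rank (a2 + a1)%MS = 4%N. Proof. exact: Hsa. Qed.
Let sa31 : \rank (a3 + a1)%MS = 4%N. Proof. exact: Hsa. Qed.
Let sb12 : \rank (b1 + b2)%MS = 4%N. Proof. exact: Hsb. Qed.
Let sb13 : \rank (b1 + b3)%MS = 4%N. Proof. exact: Hsb. Qed.
Let sb23 : \rank (b2 + b3)%MS = 4%N. Proof. exact: Hsb. Qed.
Let sb21 : \rank (b2 + b1)%MS = 4%N. Proof. exact: Hsb. Qed.
Let sb32 : \rank (b3 + b2)%MS = 4%N. Proof. exact: Hsb. Qed.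

Lemma KerP_all (P : 'rV[k]_3) : [&& van (KerP P) (fr P 0), van (KerP P) (fr P 1) & van (KerP P) (fr P 2)].
Proof. by rewrite -KerP_sub submx_refl. Qed.

Lemma pattern1 (P : 'rV[k]_3) : P 0 z1 = 0 -> P 0 z2 = 0 -> P 0 z0 != 0 -> (KerP P == a1)%MS.
Proof.
move=> e1 e2 n0; have /and3P[_ h1 h2] := KerP_all P.
move: h1 h2; rewrite /fr e1 e2 !scale0r !addr0 => h1 h2.
apply/andP; split.
  exact: two_zero_gen n0 (Hra _) sb23 b21 b31 a21 a31 n21 n31 h1 h2.
rewrite KerP_sub /fr e1 e2 !scale0r !addr0; apply/and3P; split; [exact: van0 | exact: vanZr | exact: vanZr].
Qed.

Lemma pattern2 (P : 'rV[k]_3) : P 0 z0 = 0 -> P 0 z2 = 0 -> P 0 z1 != 0 -> (KerP P == a2)%MS.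
Proof.
move=> e0 e2 n1; have /and3P[h0 _ h2] := KerP_all P.
move: h0 h2; rewrite /fr e0 e2 !scale0r !addr0 add0r => h0 h2.
apply/andP; split.
  exact: two_zero_gen n1 (Hra _) sb13 b12 b32 a12 a32 n12 n32 h0 h2.
rewrite KerP_sub /fr e0 e2 !scale0r !addr0 add0r; apply/and3P; split; [exact: vanZr | exact: van0 | exact: vanZr].
Qed.

Lemma pattern3 (P : 'rV[k]_3) : P 0 z0 = 0 -> P 0 z1 = 0 -> P 0 z2 != 0 -> (KerP P == a3)%MS.
Proof.
move=> e0 e1 n2; have /and3P[h0 h1 _] := KerP_all P.
move: h0 h1; rewrite /fr e0 e1 !scale0r !add0r => h0 h1.
apply/andP; split.
  exact: two_zero_gen n2 (Hra _) sb12 b13 b23 a13 a23 n13 n23 h0 h1.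
rewrite KerP_sub /fr e0 e1 !scale0r !add0r; apply/and3P; split; [exact: vanZr | exact: vanZr | exact: van0].
Qed.

Lemma classify (P : 'rV[k]_3) : P != 0 -> (2 <= \rank (KerP P))%N ->
  [/\ P 0 z0 != 0, P 0 z1 != 0 & P 0 z2 != 0] \/
  (KerP P == a1)%MS \/ (KerP P == a2)%MS \/ (KerP P == a3)%MS.
Proof.
move=> nP hr; have /and3P[h0 h1 h2] := KerP_all P.
move: h0 h1 h2; rewrite /fr => h0 h1 h2.
case: (eqVneq (P 0 z0) 0) => e0; case: (eqVneq (P 0 z1) 0) => e1;
  case: (eqVneq (P 0 z2) 0) => e2.
- by case/eqP: nP; apply: rv3_eq0.
- by right; right; right; apply: pattern3.
- by right; right; left; apply: pattern2.
- exfalso; move: h1 h2; rewrite e0 !scale0r !add0r => h1 h2.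
  exact: (one_zero_gen hr e2 e1 e1 n23 n12 n32 (Hra _) (Hra _) sb13 sa23
     h1 a23 h0 a13 b12 a12 b32 a32 h2).
- by right; left; apply: pattern1.
- exfalso; move: h0 h2; rewrite e1 !scale0r ?addr0 ?add0r => h0 h2.
  move: h1; rewrite addrC => h1.
  exact: (one_zero_gen hr e0 e2 e2 n31 n23 n13 (Hra _) (Hra _) sb21 sa31
     h2 a31 h1 a21 b23 a23 b13 a13 h0).
- exfalso; move: h0 h1; rewrite e2 !scale0r !addr0 => h0 h1.
  exact: (one_zero_gen hr e1 e0 e0 n12 n31 n21 (Hra _) (Hra _) sb32 sa12
     h0 a12 h2 a32 b31 a31 b21 a21 h1).
- by left.
Qed.


Section Nonzero.
Variable P : 'rV[k]_3.
Hypotheses (n0 : P 0 z0 != 0) (n1 : P 0 z1 != 0) (n2 : P 0 z2 != 0).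

Lemma fr_nz : [/\ fr P 0 != 0, fr P 1 != 0 & fr P 2 != 0].
Proof.
split; apply/eqP; rewrite /fr => e.
- by have [/eqP] := comb_nz sa23 a12 a13 n12 n13 e; rewrite (negPf n1).
- by have [/eqP] := comb_nz sa13 a21 a23 n21 n23 e; rewrite (negPf n0).
- by have [/eqP] := comb_nz sa12 a31 a32 n31 n32 e; rewrite (negPf n0).
Qed.

Lemma fr_b : [/\ van b1 (fr P 0), van b2 (fr P 1) & van b3 (fr P 2)].
Proof. by split; apply: van_lin. Qed.

Lemma Ker_le2 : (\rank (KerP P) <= 2)%N.
Proof.
have [f0 f1 _] := fr_nz; have [v0 v1 _] := fr_b; have /and3P[h0 h1 _] := KerP_all P.
exact: V5 sb12 v0 v1 f0 f1 h0 h1.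
Qed.

Lemma wdep (w : 'rV[k]_3) : w != 0 -> w *m AP P = 0 ->
  [/\ w 0 z0 != 0, w 0 z1 != 0 & w 0 z2 != 0].
Proof.
move=> nw; rewrite wAP => e.
have [f0 f1 f2] := fr_nz; have [v0 v1 v2] := fr_b.
split; apply: contra nw => /eqP e0; apply/eqP.
- move: e; rewrite e0 scale0r add0r => e.
  have [e1 e2] := comb_nz sb23 v1 v2 f1 f2 e.
  exact: rv3_eq0.
- move: e; rewrite e0 scale0r addr0 => e.
  have [e1 e2] := comb_nz sb13 v0 v2 f0 f2 e.
  exact: rv3_eq0.
- move: e; rewrite e0 scale0r addr0 => e.
  have [e1 e2] := comb_nz sb12 v0 v1 f0 f1 e.
  exact: rv3_eq0.
Qed.

End Nonzero.

Lemma wex (P : 'rV[k]_3) : (2 <= \rank (KerP P))%N ->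
  exists2 w : 'rV[k]_3, w != 0 & w *m AP P = 0.
Proof.
move=> hr.
have hA : (\rank (AP P) <= 2)%N.
  move: hr; rewrite rank_KerP; have := rank_leq_row (AP P).
  move: (\rank (AP P)) => n; clear; lia.
exists (nz_row (kermx (AP P))).
  rewrite nz_row_eq0 -mxrank_eq0 mxrank_ker.
  move: hA; move: (\rank (AP P)) => n; clear; move=> h; apply/eqP; lia.
by apply/eqP; rewrite -sub_kermx; apply: nz_row_sub.
Qed.

Definition pl (n : nat) : 'rV[k]_4 :=
  match n with 0 => p12 | 1 => p13 | 2 => p21 | 3 => p23 | 4 => p31 | _ => p32 end.
Definition Pim : 'M[k]_(6,4) := \matrix_(l < 6, j < 4) pl l 0 j.
Definition Rel := kermx Pim.

Lemma rowPim (l : 'I_6) : row l Pim = pl l.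
Proof. by apply/rowP => j; rewrite !mxE. Qed.

Lemma relE (r : 'rV[k]_6) : r *m Pim = r 0 q0 *: p12 + r 0 q1 *: p13 + r 0 q2 *: p21
  + r 0 q3 *: p23 + r 0 q4 *: p31 + r 0 q5 *: p32.
Proof. by rewrite mulmx_sum_row sum6 !rowPim. Qed.

Lemma rankRel : (\rank Rel <= 2)%N.
Proof.
set Y := kermx Pim^T.
have hY : Y *m Pim^T = 0 := mulmx_ker _.
have hv : forall l : 'I_6, van Y (pl l).
  move=> l; rewrite vanE; apply/eqP/matrixP => i j; rewrite ord1.
  have e : (Y *m (pl l)^T) i 0 = (Y *m Pim^T) i l.
    by rewrite !mxE; apply: eq_bigr => j' _; rewrite !mxE.
  by rewrite e hY !mxE.
have Y2 : (Y <= a2)%MS := V6 sb13 b12 b32 n12 n32 (Hra _) a12 a32 (hv q0) (hv q5).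
have Y3 : (Y <= a3)%MS := V6 sb12 b13 b23 n13 n23 (Hra _) a13 a23 (hv q1) (hv q3).
have Y0 := sub_cap0 sa23 Y2 Y3.
have := mxrank_ker Pim^T; rewrite -/Y Y0 mxrank0 mxrank_tr => h.
rewrite /Rel mxrank_ker; have := rank_leq_col Pim.
move: h; move: (\rank Pim) => n; clear; lia.
Qed.

Lemma relNZ (r : 'rV[k]_6) : (r <= Rel)%MS -> r 0 q0 = 0 -> r != 0 -> gg r != 0.
Proof.
move=> hr e0 nr.
have e : r *m Pim = 0 by apply/eqP; rewrite -sub_kermx.
move: e; rewrite relE e0 scale0r add0r => e.
rewrite /gg e0 !mul0r sub0r oppr_eq0 !mulf_eq0.
apply/negP => /orP[/orP[/eqP e1 | /eqP e2] | /eqP e5]; apply: (negP nr); apply/eqP.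
- move: e; rewrite e1 scale0r add0r -addrA => e.
  have x0 := V4 sb23 (van_lin _ _ b21 b23) (van_lin _ _ b31 b32) e.
  have [h2 h3] := comb_nz sa13 a21 a23 n21 n23 x0.
  move: e; rewrite x0 add0r => e.
  have [h4 h5] := comb_nz sa12 a31 a32 n31 n32 e.
  exact: rv6_eq0.
- move: e; rewrite e2 scale0r addr0 -addrA => e.
  have x0 := V4 (Hsab q2) (van_lin _ _ a13 a23) (van_lin _ _ b31 b32) e.
  have [h1 h3] := comb_nz sb12 b13 b23 n13 n23 x0.
  move: e; rewrite x0 add0r => e.
  have [h4 h5] := comb_nz sa12 a31 a32 n31 n32 e.
  exact: rv6_eq0.
- move: e; rewrite e5 scale0r addr0 => e.
  have e' : (r 0 q2 *: p21 + r 0 q4 *: p31) + (r 0 q1 *: p13 + r 0 q3 *: p23) = 0.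
    by rewrite -e addrC addrACA !addrA.
  have x0 := V4 sa13 (van_lin _ _ a21 a31) (van_lin _ _ a13 a23) e'.
  have [h2 h4] := comb_nz sb23 b21 b31 n21 n31 x0.
  move: e'; rewrite x0 add0r => e'.
  have [h1 h3] := comb_nz sb12 b13 b23 n13 n23 e'.
  exact: rv6_eq0.
Qed.

Definition cvn (w P : 'rV[k]_3) (n : nat) : k :=
  match n with
  | 0 => w 0 z0 * P 0 z1 | 1 => w 0 z0 * P 0 z2 | 2 => w 0 z1 * P 0 z0
  | 3 => w 0 z1 * P 0 z2 | 4 => w 0 z2 * P 0 z0 | _ => w 0 z2 * P 0 z1 end.
Definition cv (w P : 'rV[k]_3) : 'rV[k]_6 := \row_(l < 6) cvn w P l.

Lemma cv_rel (w P : 'rV[k]_3) : w *m AP P = 0 -> (cv w P <= Rel)%MS.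
Proof.
move=> e; rewrite /Rel sub_kermx; apply/eqP.
rewrite relE !mxE /= -e wAP /fr !scalerDr !scalerA !addrA.
by [].
Qed.

Lemma g_cv (w P : 'rV[k]_3) : gg (cv w P) = 0.
Proof. by rewrite /gg !mxE /=; ring. Qed.

Lemma cv_prop (w P w' P' : 'rV[k]_3) : w 0 z0 != 0 -> w 0 z1 != 0 ->
  P 0 z2 != 0 -> P' 0 z2 != 0 ->
  (cv w P <= cv w' P')%MS -> exists2 t, t != 0 & P = t *: P'.
Proof.
move=> nw0 nw1 nP2 nP2'; case/sub_rVP => ka e.
have E : forall l, cv w P 0 l = ka * cv w' P' 0 l by move=> l; rewrite e mxE.
have E0 := E q0; have E1 := E q1; have E2 := E q2; have E3 := E q3.
rewrite !mxE /= in E0 E1 E2 E3.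
exists (P 0 z2 / P' 0 z2); first by rewrite mulf_neq0 ?invr_eq0.
apply/rowP => l; rewrite mxE; case: l => [[|[|[|//]]] hl].
- rewrite (_ : Ordinal hl = z0); last exact/val_inj.
  apply: (mulfI nw1); rewrite E2 !mulrA E3.
  by field.
- rewrite (_ : Ordinal hl = z1); last exact/val_inj.
  apply: (mulfI nw0); rewrite E0 !mulrA E1.
  by field.
- rewrite (_ : Ordinal hl = z2); last exact/val_inj.
  by field.
Qed.

Lemma kermx_scale m n (B : 'M[k]_(m,n)) (t : k) : t != 0 -> (kermx (t *: B) == kermx B)%MS.
Proof.
move=> nt; apply/andP; split; rewrite sub_kermx.
  by have /eqP := mulmx_ker (t *: B); rewrite -scalemxAr scaler_eq0 (negPf nt).
by rewrite -scalemxAr mulmx_ker scaler0.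
Qed.

Lemma KerP_scale (t : k) (P : 'rV[k]_3) : t != 0 -> (KerP (t *: P) == KerP P)%MS.
Proof.
move=> nt.
have eA : AP (t *: P) = t *: AP P.
  apply/matrixP => r j; rewrite !mxE.
  by case: r => [[|[|[|//]]] hr]; rewrite /= !mxE; ring.
by rewrite /KerP eA linearZ /= kermx_scale.
Qed.

Lemma distinct_a (i j : 'I_6) : i != j -> (a i <= a j)%MS -> False.
Proof.
move=> nij h; have := sub_cap0 (Hsa nij) (submx_refl (a i)) h.
by move=> e; have := Hra i; rewrite e mxrank0.
Qed.

Lemma rankK2 (P : 'rV[k]_3) (i : 'I_6) : (KerP P == a i)%MS -> \rank (KerP P) = 2%N.
Proof. by move=> e; rewrite (eqmx_rank e) Hra. Qed.

Lemma construct (j : 'I_6) : (3 <= j)%N ->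
  exists P : 'rV[k]_3, [/\ P 0 z0 != 0, P 0 z1 != 0, P 0 z2 != 0 & (KerP P == a j)%MS].
Proof.
move=> hj.
have jq : forall i : 'I_6, (i < 3)%N -> j != i.
  by move=> i hi; apply/eqP => e; move: hj; rewrite e leqNgt hi.
pose p1 := nz_row (a j :&: b1)%MS.
pose p2 := nz_row (a j :&: b2)%MS.
pose p3 := nz_row (a j :&: b3)%MS.
have np1 : p1 != 0 by rewrite nz_row_eq0; apply: Hmeet; apply: jq.
have np2 : p2 != 0 by rewrite nz_row_eq0; apply: Hmeet; apply: jq.
have np3 : p3 != 0 by rewrite nz_row_eq0; apply: Hmeet; apply: jq.
have /andP[p1a p1b] : (p1 <= a j)%MS && (p1 <= b1)%MS by rewrite -sub_capmx nz_row_sub.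
have /andP[p2a p2b] : (p2 <= a j)%MS && (p2 <= b2)%MS by rewrite -sub_capmx nz_row_sub.
have /andP[p3a p3b] : (p3 <= a j)%MS && (p3 <= b3)%MS by rewrite -sub_capmx nz_row_sub.
have r12 : \rank (p1 + p2)%MS = 2%N.
  have c0 : (p1 :&: p2)%MS = 0.
    apply: (sub_cap0 sb12).
      exact: submx_trans (capmxSl _ _) p1b.
    exact: submx_trans (capmxSr _ _) p2b.
  by have := mxrank_sum_cap p1 p2; rewrite c0 mxrank0 !rank_rV np1 np2 addn0.
have s12 : (p1 + p2 <= a j)%MS by rewrite addsmx_sub p1a.
have a12' : (a j <= p1 + p2)%MS.
  by rewrite -(geq_leqif (mxrank_leqif_sup s12)) r12 Hra.
have [al [be e3]] := dec2 (submx_trans p3a a12').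
have nbe : be != 0.
  apply: contra np3 => /eqP b0; move: e3; rewrite b0 scale0r addr0 => e3.
  apply/eqP; apply: (sub_cap0 sb13 (X := p3)) => //.
  by rewrite e3; apply: scalemx_sub.
have z12 : ev p12 p1 = 0 := ev_vanish b12 p1b.
have z13 : ev p13 p1 = 0 := ev_vanish b13 p1b.
have z21 : ev p21 p2 = 0 := ev_vanish b21 p2b.
have z23 : ev p23 p2 = 0 := ev_vanish b23 p2b.
have w31 : al * ev p31 p1 + be * ev p31 p2 = 0.
  by rewrite -evL2 -e3; exact: ev_vanish b31 p3b.
have w32 : al * ev p32 p1 + be * ev p32 p2 = 0.
  by rewrite -evL2 -e3; exact: ev_vanish b32 p3b.
have [t [nt ht]] := Hinf (be / al).
have nbt : be - t * al != 0.
  case: (eqVneq al 0) => [->|nal]; first by rewrite mulr0 subr0.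
  apply: contra ht => /eqP h; apply/eqP.
  have -> : be = t * al by apply/eqP; rewrite -subr_eq0 h.
  by rewrite mulfK.
have xa : ((p1 + t *: p2)%R <= a j)%MS by apply: addmx_sub => //; apply: scalemx_sub.
have dx := Hdet hj xa.
rewrite /det3 !evD z12 z13 z21 z23 in dx.
have D0 := scalar_key nt nbt w31 w32 dx.
have [P nP [s1 s2 s3]] := key_sol D0.
have p1K : (p1 <= KerP P)%MS.
  rewrite KerP_sub /fr !van_ev !evL z12 z13 !mulr0 addr0 eqxx /=.
  by rewrite s2 s3 eqxx.
have p2K : (p2 <= KerP P)%MS.
  rewrite KerP_sub /fr !van_ev !evL z21 z23 !mulr0 addr0 eqxx /=.
  by rewrite s1 (scal2 nbe w31 w32 s3) eqxx.
have ajK : (a j <= KerP P)%MS by apply: submx_trans a12' _; rewrite addsmx_sub p1K.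
have hr : (2 <= \rank (KerP P))%N by have := mxrankS ajK; rewrite Hra.
case: (classify nP hr) => [[m0 m1 m2]|[h|[h|h]]].
- exists P; split => //; apply/andP; split => //.
  by rewrite -(geq_leqif (mxrank_leqif_sup ajK)) Hra Ker_le2.
- by exfalso; apply: (@distinct_a j q0 (jq q0 isT)); apply: submx_trans ajK _; case/andP: h.
- by exfalso; apply: (@distinct_a j q1 (jq q1 isT)); apply: submx_trans ajK _; case/andP: h.
- by exfalso; apply: (@distinct_a j q2 (jq q2 isT)); apply: submx_trans ajK _; case/andP: h.
Qed.

Lemma forward (P : 'rV[k]_3) (L : 'M[k]_(2,4)) : P != 0 -> \rank (AP P) = 2%N ->
  (L == KerP P)%MS -> exists i : 'I_6, (L == a i)%MS.
Proof.
move=> nP rA hL.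
have hr : (2 <= \rank (KerP P))%N by rewrite rank_KerP rA.
case: (classify nP hr) => [[m0 m1 m2]|[h|[h|h]]];
  [idtac | by exists q0; apply: eqmx_tr hL h | by exists q1; apply: eqmx_tr hL h
         | by exists q2; apply: eqmx_tr hL h].
have [w nw ew] := wex hr.
have [w0 w1 w2] := wdep m0 m1 nw ew.
have [P3 [m30 m31 m32 K3]] := construct (isT : (3 <= q3)%N).
have [P4 [m40 m41 m42 K4]] := construct (isT : (3 <= q4)%N).
have [P5 [m50 m51 m52 K5]] := construct (isT : (3 <= q5)%N).
have hr3 : (2 <= \rank (KerP P3))%N by rewrite (rankK2 K3).
have hr4 : (2 <= \rank (KerP P4))%N by rewrite (rankK2 K4).
have hr5 : (2 <= \rank (KerP P5))%N by rewrite (rankK2 K5).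
have [w3 nw3 ew3] := wex hr3; have [w30 w31 w32] := wdep m30 m31 nw3 ew3.
have [w4 nw4 ew4] := wex hr4; have [w40 w41 w42] := wdep m40 m41 nw4 ew4.
have [w5 nw5 ew5] := wex hr5; have [w50 w51 w52] := wdep m50 m51 nw5 ew5.
have close : forall (w' P' : 'rV[k]_3) (j : 'I_6), P' 0 z2 != 0 ->
    (KerP P' == a j)%MS -> (cv w P <= cv w' P')%MS -> (L == a j)%MS.
  move=> w' P' j n2' K' h; have [t nt eP] := cv_prop w0 w1 m2 n2' h.
  apply: eqmx_tr hL _; rewrite eP; apply: eqmx_tr K'; exact: KerP_scale.
have sep : forall (w' P' w'' P'' : 'rV[k]_3) (i j : 'I_6), i != j ->
    w' 0 z0 != 0 -> w' 0 z1 != 0 -> P' 0 z2 != 0 -> P'' 0 z2 != 0 ->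
    (KerP P' == a i)%MS -> (KerP P'' == a j)%MS -> ~~ (cv w' P' <= cv w'' P'')%MS.
  move=> w' P' w'' P'' i j nij n0' n1' n2' n2'' K' K''; apply/negP => h.
  have [t nt eP] := cv_prop n0' n1' n2' n2'' h.
  apply: (distinct_a nij).
  case/andP: K' => _ h1; case/andP: K'' => h2 _.
  have /andP[h3 _] : (KerP P' == KerP P'')%MS by rewrite eP KerP_scale.
  exact: submx_trans h1 (submx_trans h3 h2).
case: (boolP (cv w P <= cv w3 P3)%MS) => h3; first by exists q3; apply: close h3.
case: (boolP (cv w P <= cv w4 P4)%MS) => h4; first by exists q4; apply: close h4.
case: (boolP (cv w P <= cv w5 P5)%MS) => h5; first by exists q5; apply: close h5.
exfalso.
have n30 : cv w3 P3 0 q0 != 0 by rewrite mxE /= mulf_neq0.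
exact: (four_root rankRel (cv_rel ew3) (cv_rel ew4) (cv_rel ew5) (cv_rel ew)
  (g_cv _ _) (g_cv _ _) (g_cv _ _) (g_cv _ _) n30
  (sep _ _ _ _ q4 q3 isT w40 w41 m42 m32 K4 K3)
  (sep _ _ _ _ q5 q3 isT w50 w51 m52 m32 K5 K3)
  (sep _ _ _ _ q5 q4 isT w50 w51 m52 m42 K5 K4)
  h3 h4 h5 relNZ).
Qed.

Definition ei (z : 'I_3) : 'rV[k]_3 := \row_(c < 3) ((c == z)%:R).

Lemma ei_nz z : ei z != 0.
Proof.
apply/eqP => e; have := congr1 (fun v : 'rV[k]_3 => v 0 z) e.
by rewrite !mxE eqxx /= => /eqP; rewrite oner_eq0.
Qed.

Lemma backward (i : 'I_6) (L : 'M[k]_(2,4)) : (L == a i)%MS ->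
  exists P : 'rV[k]_3, [/\ P != 0, \rank (AP P) = 2%N & (L == KerP P)%MS].
Proof.
move=> hL.
have fin : forall P : 'rV[k]_3, P != 0 -> (KerP P == a i)%MS ->
    exists P0 : 'rV[k]_3, [/\ P0 != 0, \rank (AP P0) = 2%N & (L == KerP P0)%MS].
  move=> P nP K; exists P; split => //.
    have := rankK2 K; rewrite rank_KerP; have := rank_leq_row (AP P).
    by move: (\rank (AP P)) => n; clear; lia.
  by apply: eqmx_tr hL _; case/andP: K => h1 h2; apply/andP.
move: fin; case: i hL => [[|[|[|n]]] hi].
- rewrite (_ : Ordinal hi = q0); last exact/val_inj.
  move=> hL fin; apply: fin (ei_nz z0) _.
  by apply: pattern1; rewrite !mxE //= oner_eq0.
- rewrite (_ : Ordinal hi = q1); last exact/val_inj.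
  move=> hL fin; apply: fin (ei_nz z1) _.
  by apply: pattern2; rewrite !mxE //= oner_eq0.
- rewrite (_ : Ordinal hi = q2); last exact/val_inj.
  move=> hL fin; apply: fin (ei_nz z2) _.
  by apply: pattern3; rewrite !mxE //= oner_eq0.
- move=> hL fin.
  have [P [m0 m1 m2 K]] := construct (isT : (3 <= Ordinal hi)%N).
  apply: fin K; apply/eqP => e; move: m0; rewrite e mxE eqxx //.
Qed.

Theorem core (L : 'M[k]_(2,4)) :
  (exists P : 'rV[k]_3, [/\ P != 0, \rank (AP P) = 2%N & (L == KerP P)%MS]) <->
  (exists i : 'I_6, (L == a i)%MS).
Proof.
split; first by case=> P [nP rA hL]; exact: forward nP rA hL.
by case=> i h; apply: backward h.
Qed.

End Core.

Lemma lin_eval_ev (k : fieldType) (l x : 'rV[k]_4) : lin_eval l x = ev l x.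
Proof. by rewrite /lin_eval /ev !mxE; apply: eq_bigr => j _; rewrite !mxE mulrC. Qed.

Lemma pt_eval_lin (k : fieldType) (l x : 'rV[k]_4) :
  (lin_poly l).@[fun i => x 0 i] = ev l x.
Proof.
rewrite -lin_eval_ev /lin_eval /lin_poly !sum4.
by rewrite !mevalD !mevalZ !mevalXU.
Qed.

Lemma van_form (k : fieldType) (l : 'rV[k]_4) (U : 'M[k]_(2,4)) :
  form_vanishes_on l U -> van U l.
Proof.
move=> h; rewrite vanE; apply/eqP/matrixP => i j; rewrite ord1 [RHS]mxE.
have := h (row i U) (row_sub i U); rewrite lin_eval_ev /ev.
by rewrite -row_mul mxE.
Qed.

Lemma closed_inf (k : closedFieldType) (u : k) : exists t : k, t != 0 /\ t != u.
Proof.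
have [x hx] := @solve_monicpoly k 2 (fun i => if i is 0 then 1 else u) isT.
move: hx; rewrite !big_ord_recr big_ord0 /= add0r expr0 expr1 mulr1 => hx.
exists x; split; apply/eqP => e; move: hx; rewrite e.
  by rewrite expr0n /= mulr0 addr0 => /esym/eqP; rewrite oner_eq0.
rewrite expr2 => /(congr1 (fun y => y - u * u)); rewrite addrK subrr.
by move/esym/eqP; rewrite oner_eq0.
Qed.

Lemma i36z0 : i36 z0 = q0. Proof. exact: val_inj. Qed.
Lemma i36z1 : i36 z1 = q1. Proof. exact: val_inj. Qed.
Lemma i36z2 : i36 z2 = q2. Proof. exact: val_inj. Qed.

Lemma formsAP (k : fieldType) (pi : 'I_6 -> 'I_6 -> 'rV[k]_4) (P : 'rV[k]_3) :
  forms_at (Rmat pi) P = AP pi P.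
Proof.
apply/matrixP => r j; rewrite !mxE sum3 !mxE.
case: r => [[|[|[|//]]] hr].
- rewrite (_ : Ordinal hr = z0); last exact: val_inj.
  by rewrite /= !i36z0 !i36z1 !i36z2 !mxE; ring.
- rewrite (_ : Ordinal hr = z1); last exact: val_inj.
  by rewrite /= !i36z0 !i36z1 !i36z2 !mxE; ring.
- rewrite (_ : Ordinal hr = z2); last exact: val_inj.
  by rewrite /= !i36z0 !i36z1 !i36z2 !mxE; ring.
Qed.

Lemma Rmat_tr (k : fieldType) (pi : 'I_6 -> 'I_6 -> 'rV[k]_4) :
  (Rmat pi)^T = Rmat (fun i j => pi j i).
Proof. by apply/matrixP => r c; rewrite !mxE eq_sym. Qed.

Theorem mainTheorem2 (k : closedFieldType) (F : {mpoly k[4]})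
    (a b : 'I_6 -> 'M[k]_(2,4)) (pi : 'I_6 -> 'I_6 -> 'rV[k]_4) :
  smooth_cubic_form F ->
  double_six F a b ->
  (forall i j : 'I_6, i != j ->
     pi i j != 0 /\ form_vanishes_on (pi i j) (b i) /\ form_vanishes_on (pi i j) (a j)) ->
  (exists c : k, c != 0 /\
     lin_poly (pi (i36 0) (i36 1)) * lin_poly (pi (i36 1) (i36 2)) * lin_poly (pi (i36 2) (i36 0))
   + lin_poly (pi (i36 0) (i36 2)) * lin_poly (pi (i36 1) (i36 0)) * lin_poly (pi (i36 2) (i36 1))
   = c *: F) ->
  (forall L : 'M[k]_(2,4), is_line L ->
     corr_line (Rmat pi) L <-> exists i : 'I_6, (L == a i)%MS) /\
  (forall L : 'M[k]_(2,4), is_line L ->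
     corr_line (Rmat pi)^T L <-> exists i : 'I_6, (L == b i)%MS).
Proof.
move=> _ [Hlines [Hska [Hskb Hmab]]] Hpi0 [c [_ Hc]].
have e0 : i36 0 = q0 by apply/val_inj.
have e1 : i36 1 = q1 by apply/val_inj.
have e2 : i36 2 = q2 by apply/val_inj.
rewrite e2 e1 e0 in Hc.
have Hra : forall i, \rank (a i) = 2%N by move=> i; case: (Hlines i).
have Hrb : forall i, \rank (b i) = 2%N by move=> i; case: (Hlines i) => _ [].
have sk : forall (U V : 'M[k]_(2,4)), \rank U = 2%N -> \rank V = 2%N ->
    ~~ lines_meet U V -> \rank (U + V)%MS = 4%N.
  move=> U V hU hV; rewrite /lines_meet negbK => /eqP h0.
  by have := mxrank_sum_cap U V; rewrite h0 mxrank0 hU hV addn0.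
have Hsa : forall i j, i != j -> \rank (a i + a j)%MS = 4%N.
  by move=> i j nij; apply: sk (Hra i) (Hra j) (Hska i j nij).
have Hsb : forall i j, i != j -> \rank (b i + b j)%MS = 4%N.
  by move=> i j nij; apply: sk (Hrb i) (Hrb j) (Hskb i j nij).
have Hsab : forall i, \rank (a i + b i)%MS = 4%N.
  by move=> i; apply: sk (Hra i) (Hrb i) _; rewrite Hmab eqxx.
have Hsba : forall i, \rank (b i + a i)%MS = 4%N.
  by move=> i; rewrite addsmxC.
have Hmeet : forall i j, i != j -> (a i :&: b j)%MS != 0.
  by move=> i j nij; have := Hmab i j; rewrite nij.
have Hmeet' : forall i j, i != j -> (b i :&: a j)%MS != 0.
  by move=> i j nij; rewrite capmxC; apply: Hmeet; rewrite eq_sym.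
have Hpi : forall i j, i != j ->
    [/\ pi i j != 0, van (b i) (pi i j) & van (a j) (pi i j)].
  by move=> i j nij; case: (Hpi0 i j nij) => n [h1 h2]; split => //; apply: van_form.
have Hpi' : forall i j, i != j ->
    [/\ pi j i != 0, van (a i) (pi j i) & van (b j) (pi j i)].
  by move=> i j nij; rewrite eq_sym in nij; case: (Hpi j i nij).
have Hdc : forall x : 'rV[k]_4, det3 pi x = c * pt_eval F x.
  move=> x; have := congr1 (fun p => pt_eval p x) Hc.
  rewrite /pt_eval mevalD !mevalM mevalZ !pt_eval_lin => <-.
  by [].
have Hdet : forall j : 'I_6, (3 <= j)%N -> forall x : 'rV[k]_4, (x <= a j)%MS ->
    det3 pi x = 0.
  move=> j _ x hx; rewrite Hdc.
  by case: (Hlines j) => _ [_ [h _]]; rewrite (h x hx) mulr0.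
have Hdet' : forall j : 'I_6, (3 <= j)%N -> forall x : 'rV[k]_4, (x <= b j)%MS ->
    det3 (fun i j => pi j i) x = 0.
  move=> j _ x hx.
  have -> : det3 (fun i j => pi j i) x = det3 pi x by rewrite /det3; ring.
  rewrite Hdc.
  by case: (Hlines j) => _ [_ [_ h]]; rewrite (h x hx) mulr0.
have Hinf := @closed_inf k.
split => L _; rewrite /corr_line.
  rewrite -(core Hra Hsa Hsb Hsab Hmeet Hpi Hdet Hinf L).
  split => [[P [nP [r h]]] | [P [nP r h]]]; exists P; rewrite formsAP in r h *.
    by split.
  by split.
rewrite Rmat_tr -(core Hrb Hsb Hsa Hsba Hmeet' Hpi' Hdet' Hinf L).
split => [[P [nP [r h]]] | [P [nP r h]]]; exists P; rewrite formsAP in r h *.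
  by split.
by split.
Qed.
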